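(* Let $1\le r\le n$ and let $P_1,\dots,P_n$ be independent or PRDS p-values satisfying (i) for every $\alpha>0$ and every $i$, $\sup_{\theta_i\in\Theta_{1i}}\Pr_{\theta_i}(P_i\le\alpha)=1$, and (ii) for every $i$ and every $\theta_i\in\Theta_{1i}$, $\Pr_{\theta_i}(P_i=0)=0$. Let $P_{r/n}=f(P_1,\dots,P_n)$ be a valid monotone p-value for $H_0^{r/n}$. Then there exists a valid GBHPC p-value $P^\star_{r/n}$ that is uniformly at least as powerful as $P_{r/n}$, i.e. $\Pr_\theta(P^\star_{r/n}\le\alpha)\ge\Pr_\theta(P_{r/n}\le\alpha)$ for all $\alpha\in[0,1]$ and all $\theta\in\Theta_1^{r/n}$.
   Context: Component hypotheses $H_{0i}:\theta_i\in\Theta_{0i}$ vs $H_{1i}:\theta_i\in\Theta_{1i}$ ($\Theta_i=\Theta_{0i}\cup\Theta_{1i}$ disjoint), $i=1,\dots,n$; $P_i$ has distribution $\Pr_{\theta_i}$ and is valid: $\sup_{\theta_i\in\Theta_{0i}}\Pr_{\theta_i}(P_i\le\alpha)\le\alpha$. The joint law of $\boldsymbol P$ is $\Pr_\theta$. PRDS means positively regression dependent in the sense of Benjamini and Yekutieli (2001) under every $\theta$; in particular $\Pr_\theta(P_1\le p_1,\dots,P_n\le p_n)\ge\prod_i\Pr_{\theta_i}(P_i\le p_i)$. $H_0^{r/n}$: at most $r-1$ of the $H_{0i}$ are false (null space $\Theta_0^{r/n}$); $\Theta_1^{r/n}$: at least $r$ of the $\theta_i$ lie in $\Theta_{1i}$.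 A combined p-value $f$ is valid for $H_0^{r/n}$ if $\sup_{\theta\in\Theta_0^{r/n}}\Pr_\theta(f(\boldsymbol P)\le\alpha)\le\alpha$ for all $\alpha$, and monotone if non-decreasing in each argument. For $u\subset\{1,\dots,n\}$, $\boldsymbol p_u=(p_j)_{j\in u}$ and $H_{0u}$: $\theta_j\in\Theta_{0j}$ for all $j\in u$. A GBHPC p-value is $f^\star(\boldsymbol p)=\max_{|u|=n-r+1}g_u(\boldsymbol p_u)$, where each $g_u:[0,1]^{n-r+1}\to[0,1]$ is non-decreasing and a valid meta-analysis p-value for $H_{0u}$ (i.e. $\sup_{\theta_u\in\Theta_{0u}}\Pr_{\theta_u}(g_u(\boldsymbol P_u)\le\alpha)\le\alpha$ for all $\alpha$). *)

(* Defs.v *)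
From HB Require Import structures.
From mathcomp Require Import all_boot all_order all_algebra.
From mathcomp Require Import all_classical all_reals all_analysis.
Set Implicit Arguments.
Unset Strict Implicit.
Unset Printing Implicit Defensive.
Import Order.TTheory GRing.Theory Num.Theory.
Local Open Scope classical_set_scope.
Local Open Scope ring_scope.

(* Model.  n component hypotheses; component i has parameter space Theta i and
   null part Theta0 i (alternative part = complement).  The vector of p-values is a
   map P : Omega -> n.-tuple R (product Borel sigma-algebra on n.-tuple R),
   and Pr_theta is the probability measure mu theta on Omega. *)

Section Defs.
Variable R : realType.

Definition in01 (x : R) := 0 <= x <= 1.
Definition in01n n (p : n.-tuple R) := forall i : 'I_n, in01 (tnth p i).
Definition tle n (p q : n.-tuple R) := forall i : 'I_n, tnth p i <= tnth q i.

Definition monotone01 n (f : n.-tuple R -> R) :=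
  forall p q, in01n p -> in01n q -> tle p q -> f p <= f q.

Definition pvalue_fun n (f : n.-tuple R -> R) :=
  measurable_fun [set: n.-tuple R] f /\ (forall p, in01n p -> in01 (f p)).

(* g depends only on the coordinates in u, i.e. g(p) = g_u(p_u) *)
Definition depends_only_on n (u : {set 'I_n}) (g : n.-tuple R -> R) :=
  forall p q : n.-tuple R, (forall j, j \in u -> tnth p j = tnth q j) -> g p = g q.
Definition set_depends_only_on n (u : {set 'I_n}) (D : set (n.-tuple R)) :=
  forall p q : n.-tuple R, (forall j, j \in u -> tnth p j = tnth q j) -> (D p <-> D q).

Definition increasing_set n (D : set (n.-tuple R)) :=
  forall p q, tle p q -> D p -> D q.

Variables (d : measure_display) (Omega : measurableType d) (n : nat).
Variable Theta : 'I_n -> Type.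
Variable Theta0 : forall i, set (Theta i).
Variable mu : (forall i, Theta i) -> probability Omega R.
Variable P : Omega -> n.-tuple R.

Definition Pi (i : 'I_n) (w : Omega) : R := tnth (P w) i.

Definition nfalse (theta : forall i, Theta i) : nat :=
  #|[set i : 'I_n | ~~ `[< Theta0 (theta i) >] ]|.

Definition null_rn (r : nat) theta := (nfalse theta <= r.-1)%N.
Definition alt_rn (r : nat) theta := (r <= nfalse theta)%N.

Definition null_u (u : {set 'I_n}) (theta : forall i, Theta i) :=
  forall j, j \in u -> Theta0 (theta j).

Definition valid_for (H : (forall i, Theta i) -> Prop) (g : n.-tuple R -> R) :=
  forall theta, H theta -> forall alpha : R, in01 alpha ->
    (mu theta [set w | (g (P w) <= alpha)%R] <= alpha%:E)%E.

Definition independent_under theta :=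
  forall B : 'I_n -> set R, (forall i, measurable (B i)) ->
    mu theta (\bigcap_(i in [set: 'I_n]) (Pi i @^-1` B i)) =
    (\prod_(i < n) mu theta (Pi i @^-1` B i))%E.

(* PRDS (Benjamini & Yekutieli 2001), on all coordinates: for every
   measurable increasing D and every i, P(P \in D | P_i = x) admits a version
   nondecreasing in x.  A version of the conditional probability is a
   measurable h with P(P \in D, P_i \in B) = E[h(P_i) 1{P_i \in B}]. *)
Definition PRDS_under theta :=
  forall (i : 'I_n) (D : set (n.-tuple R)), measurable D -> increasing_set D ->
    exists h : R -> R,
      [/\ measurable_fun [set: R] h, {homo h : x y / x <= y} &
        forall B : set R, measurable B ->
          mu theta (P @^-1` D `&` Pi i @^-1` B) =
          (\int[mu theta]_(w in Pi i @^-1` B) (h (Pi i w))%:E)%E].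

Definition GBHPC (r : nat) (fstar : n.-tuple R -> R) :=
  exists g : {set 'I_n} -> n.-tuple R -> R,
    (forall u : {set 'I_n}, #|u| = (n - r + 1)%N ->
       [/\ depends_only_on u (g u), pvalue_fun (g u), monotone01 (g u)
         & valid_for (null_u u) (g u)]) /\
    (forall p, in01n p ->
       fstar p = \big[Num.max/0]_(u : {set 'I_n} | #|u| == (n - r + 1)%N) g u p).

End Defs.

(* Main.v *)
Require Import Defs.
From HB Require Import structures.
From mathcomp Require Import all_boot all_order all_algebra.
From mathcomp Require Import all_classical all_reals all_analysis.
From mathcomp Require Import measurable_realfun.
From mathcomp Require Import lra zify.
Import Order.TTheory GRing.Theory Num.Theory.
Import numFieldNormedType.Exports.
Set Implicit Arguments.
Unset Strict Implicit.
Unset Printing Implicit Defensive.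
Local Open Scope classical_set_scope.
Local Open Scope ring_scope.

Section Helpers.
Variable R : realType.
Variable n : nat.
Implicit Types (u : {set 'I_n}) (dl : R) (p q : n.-tuple R) (x a : R).

Definition clamp01 (x : R) : R := Num.max 0 (Num.min x 1).
Definition repl (u : {set 'I_n}) (dl : R) (p : n.-tuple R) : n.-tuple R :=
  [tuple (if i \in u then clamp01 (tnth p i) else dl) | i < n].
Definition seqg (f : n.-tuple R -> R) u p (k : nat) : R :=
  f (repl u (k.+1%:R^-1) p).
Definition gfun (f : n.-tuple R -> R) u p : R := inf (range (seqg f u p)).

Lemma clamp01_in01 x : in01 (clamp01 x).
Proof.
rewrite /in01 /clamp01 le_max lexx /= ge_max ler01 /= ge_min lexx orbT //.
Qed.

Lemma clamp01_id x : in01 x -> clamp01 x = x.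
Proof.
move=> /andP[x0 x1]; rewrite /clamp01 (min_l x1) (max_r x0) //.
Qed.

Lemma repl_in01n u dl p : 0 <= dl <= 1 -> in01n (repl u dl p).
Proof.
move=> hd i; rewrite tnth_mktuple; case: ifP => _ //; exact: clamp01_in01.
Qed.

Lemma repl_mono_delta u dl dl' p : dl <= dl' -> tle (repl u dl p) (repl u dl' p).
Proof. by move=> h i; rewrite !tnth_mktuple; case: ifP. Qed.

Lemma repl_dep u dl p q : (forall j, j \in u -> tnth p j = tnth q j) ->
  repl u dl p = repl u dl q.
Proof.
move=> h; apply: eq_from_tnth => i; rewrite !tnth_mktuple.
by case: ifP => // /h ->.
Qed.

Lemma repl_mono_p u dl p q : in01n p -> in01n q -> tle p q ->
  tle (repl u dl p) (repl u dl q).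
Proof.
move=> hp hq hpq i; rewrite !tnth_mktuple; case: ifP => // _.
by rewrite !clamp01_id.
Qed.

Lemma repl_ge u dl p : in01n p -> (forall j, j \notin u -> tnth p j <= dl) ->
  tle p (repl u dl p).
Proof.
move=> hp h i; rewrite tnth_mktuple; case: ifPn => hi.
  by rewrite clamp01_id.
exact: h.
Qed.

Lemma repl_le u dl p : in01n p -> (forall j, j \notin u -> dl <= tnth p j) ->
  tle (repl u dl p) p.
Proof.
move=> hp h i; rewrite tnth_mktuple; case: ifPn => hi.
  by rewrite clamp01_id.
exact: h.
Qed.

Lemma measurable_repl u dl : measurable_fun [set: n.-tuple R] (repl u dl).
Proof.
apply/measurable_fun_tnthP => i.
have -> : (tnth (T:=R))^~ i \o repl u dl =
   (fun p => if i \in u then clamp01 (tnth p i) else dl).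
  by apply: funext => p /=; rewrite tnth_mktuple.
case: (i \in u); last exact: measurable_cst.
apply: measurable_maxr; first exact: measurable_cst.
apply: measurable_minr; last exact: measurable_cst.
exact: measurable_tnth.
Qed.

Variable f : n.-tuple R -> R.
Hypothesis hf : pvalue_fun f.
Hypothesis mf : monotone01 f.

Lemma inv_in01 (k : nat) : in01 (k.+1%:R^-1 : R).
Proof.
rewrite /in01 invr_ge0 ler0n /= invf_le1 ?ltr0n // ler1n //.
Qed.

Lemma seqg_noninc u p : {homo seqg f u p : a b / (a <= b)%N >-> b <= a}.
Proof.
move=> a b hab; rewrite /seqg; apply: mf; try exact: repl_in01n (inv_in01 _).
apply: repl_mono_delta; rewrite lef_pV2 ?posrE ?ltr0n // ler_nat ltnS //.
Qed.

Lemma seqg_in01 u p k : in01 (seqg f u p k).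
Proof. by apply: hf.2; apply: repl_in01n (inv_in01 _). Qed.

Lemma seqg_lb u p : has_lbound (range (seqg f u p)).
Proof. by exists 0 => _ [k _ <-]; case/andP: (seqg_in01 u p k). Qed.

Lemma gfun_cvg u p : seqg f u p k @[k --> \oo] --> gfun f u p.
Proof. exact: nonincreasing_cvgn (seqg_noninc u p) (seqg_lb u p). Qed.

Lemma gfun_le u p k : gfun f u p <= seqg f u p k.
Proof. by apply: (ge_inf (seqg_lb u p)); exists k. Qed.

Lemma gfun_in01 u p : in01 (gfun f u p).
Proof.
apply/andP; split.
  apply: lb_le_inf; first by exists (seqg f u p 0%N), 0%N.
  by move=> _ [k _ <-]; case/andP: (seqg_in01 u p k).
by apply: le_trans (gfun_le u p 0%N) _; case/andP: (seqg_in01 u p 0%N).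
Qed.

Lemma gfun_mono u : monotone01 (gfun f u).
Proof.
move=> p q hp hq hpq; apply: lb_le_inf; first by exists (seqg f u q 0%N), 0%N.
move=> _ [k _ <-]; apply: le_trans (gfun_le u p k) _.
apply: mf; try exact: repl_in01n (inv_in01 _).
exact: repl_mono_p.
Qed.

Lemma gfun_dep u : depends_only_on u (gfun f u).
Proof.
move=> p q h; rewrite /gfun /seqg.
by under eq_fun do rewrite (repl_dep _ h).
Qed.

Lemma gfun_meas u : measurable_fun [set: n.-tuple R] (gfun f u).
Proof.
apply: (@measurable_fun_cvg _ _ _ _ (fun k p => seqg f u p k)).
  move=> k; apply: measurableT_comp; first exact: hf.1.
  exact: measurable_repl.
by move=> p _; exact: gfun_cvg.
Qed.

Lemma gfun_lt u p a : gfun f u p < a -> exists k, seqg f u p k < a.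
Proof.
move=> /inf_lt [| _ [k _ <-] h]; first by exists (seqg f u p 0%N), 0%N.
by exists k.
Qed.

Lemma gfun_le_f u p : in01n p -> (forall j, 0 < tnth p j) -> gfun f u p <= f p.
Proof.
move=> hp hpos.
pose m := \big[Num.min/1]_(j < n) tnth p j.
have m0 : 0 < m by apply: (big_ind (fun x => 0 < x)) => //= x y hx hy; rewrite lt_min hx hy.
have mle j : m <= tnth p j by rewrite /m (bigmin_le_cond _ _ (erefl true)) //.
pose k := Num.truncn (m^-1).
apply: le_trans (gfun_le u p k) _; rewrite /seqg; apply: mf => //.
  exact: repl_in01n (inv_in01 _).
apply: repl_le => // j _.
apply: le_trans (mle j); apply: ltW.
rewrite -[m]invrK ltf_pV2 ?posrE ?invr_gt0 ?ltr0n //.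
exact: truncnS_gt.
Qed.

End Helpers.

Unset Implicit Arguments.
Set Strict Implicit.

Lemma ubound_seq d' (T : measurableType d') (Rr : realType)
  (m : {measure set T -> \bar Rr}) (I : Type) (s : seq I) (F : I -> set T) (A : set T) :
  measurable A -> (forall i, measurable (F i)) ->
  (m (A `|` \big[setU/set0]_(i <- s) F i) <= m A + \sum_(i <- s) m (F i))%E.
Proof.
move=> mA mF; elim: s A mA => [|i s IH] A mA.
  by rewrite !big_nil setU0 adde0.
rewrite !big_cons setUA (setUC A) -setUA.
apply: le_trans (measureU2 _ _ _) _ => //.
  by apply: measurableU => //; apply: bigsetU_measurable.
by rewrite addeCA; apply: leeD => //; exact: IH.
Qed.

Lemma in_bigsetU (T : Type) (I : eqType) (s : seq I) (F : I -> set T) j x :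
  j \in s -> F j x -> (\big[setU/set0]_(i <- s) F i) x.
Proof.
elim: s => [//|i s IH]; rewrite in_cons big_cons => /orP[/eqP <- h|h h'].
  by left.
by right; apply: IH.
Qed.

Section Main.
Variables (R : realType) (d : measure_display) (Omega : measurableType d)
  (n r : nat) (Theta : 'I_n -> Type) (Theta0 : forall i, set (Theta i))
  (mu : (forall i, Theta i) -> probability Omega R)
  (P : Omega -> n.-tuple R)
  (marg : forall i : 'I_n, Theta i -> probability R R)
  (f : n.-tuple R -> R).
Hypotheses (hr : (1 <= r <= n)%N) (mP : measurable_fun [set: Omega] P)
  (P01 : forall w, in01n (P w))
  (hmarg : forall theta (i : 'I_n) (A : set R), measurable A ->
     mu theta (Pi P i @^-1` A) = marg i (theta i) A)
  (hdep : forall (u : {set 'I_n}) (theta theta' : forall i, Theta i),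
     (forall j, j \in u -> theta j = theta' j) ->
     forall D : set (n.-tuple R), measurable D -> set_depends_only_on u D ->
     mu theta (P @^-1` D) = mu theta' (P @^-1` D))
  (hvalid : forall (i : 'I_n) (alpha : R), in01 alpha ->
     (ereal_sup [set marg i t `]-oo, alpha]%classic | t in Theta0 i] <= alpha%:E)%E)
  (hcond1 : forall (alpha : R), 0 < alpha -> forall i : 'I_n,
     ereal_sup [set marg i t `]-oo, alpha]%classic | t in ~` Theta0 i] = 1%E)
  (hcond2 : forall (i : 'I_n) (t : Theta i), ~ Theta0 i t -> marg i t [set 0] = 0%E)
  (hf : pvalue_fun f) (mf : monotone01 f)
  (fvalid : valid_for mu P (null_rn Theta0 r) f).

Lemma meas_le (h : n.-tuple R -> R) (a : R) : measurable_fun setT h ->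
  measurable [set w | h (P w) <= a].
Proof.
move=> mh; rewrite -[X in measurable X]setTI.
apply: (@measurable_fun_le _ _ _ _ (h \o P) (fun=> a)) => //.
exact: measurableT_comp mh mP.
Qed.

Lemma mPi j : measurable_fun setT (Pi P j).
Proof. exact: measurableT_comp (measurable_tnth j) mP. Qed.

Lemma mpre j (A : set R) : measurable A -> measurable (Pi P j @^-1` A).
Proof. by move=> mA; rewrite -[X in measurable X]setTI; apply: mPi. Qed.

Lemma zero_null theta j : mu theta (Pi P j @^-1` [set 0]) = 0%E.
Proof.
rewrite hmarg //; case: (pselect (Theta0 j (theta j))) => h; last exact: hcond2.
apply/eqP; rewrite eq_le measure_ge0 andbT.
apply: (@le_trans _ _ (marg j (theta j) `]-oo, 0]%classic)).
  by apply: le_measure; rewrite ?inE // => x /= ->; rewrite in_itv /=.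
have h0 : in01 (0 : R) by rewrite /in01 lexx ler01.
change (marg j (theta j) `]-oo, 0%R]%classic <= (0:R)%:E)%E.
have H := hvalid j 0 h0.
eapply le_trans; [|exact H].
by apply: ereal_sup_ubound; exists (theta j).
Qed.

Lemma stepA (u : {set 'I_n}) : #|u| = (n - r + 1)%N -> forall theta : (forall i, Theta i), null_u Theta0 u theta ->
  forall (k : nat) (a : R), in01 a ->
  (mu theta [set w | (seqg f u (P w) k <= a)%R] <= a%:E)%E.
Proof.
move=> cu theta hth k a ha.
set dl : R := k.+1%:R^-1.
have dl0 : 0 < dl by rewrite invr_gt0 ltr0n.
pose D := [set p : n.-tuple R | f (repl u dl p) <= a].
have mD : measurable D.
  rewrite /D -[X in measurable X]setTI.
  apply: (@measurable_fun_le _ _ _ _ (f \o repl u dl) (fun=> a)) => //.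
  exact: measurableT_comp hf.1 (measurable_repl u dl).
have dD : set_depends_only_on u D.
  by move=> p q h; rewrite /D /= (repl_dep _ h).
change (mu theta (P @^-1` D) <= a%:E)%E.
apply/lee_addgt0Pr => e e0.
pose eps := e / n.+1%:R.
have eps0 : 0 < eps by rewrite divr_gt0 // ltr0n.
have ex_t : forall i : 'I_n, exists t : Theta i,
    ~ Theta0 i t /\ ((1 - eps)%:E < marg i t `]-oo, dl]%classic)%E.
  move=> i; have : ((1 - eps)%:E <
      ereal_sup [set marg i t `]-oo, dl]%classic | t in ~` Theta0 i])%E.
    by rewrite hcond1 // lte_fin; lra.
  by move=> /ereal_sup_gt [_ [t ht <-] h]; exists t.
pose tt := fun i => proj1_sig (cid (ex_t i)).
have ttP i : ~ Theta0 i (tt i) /\ ((1 - eps)%:E < marg i (tt i) `]-oo, dl]%classic)%E.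
  exact: proj2_sig (cid (ex_t i)).
pose theta' : forall i, Theta i := fun i => if i \in u then theta i else tt i.
rewrite (hdep u theta theta') //; last by move=> j ju; rewrite /theta' ju.
have hnull : null_rn Theta0 r theta'.
  rewrite /null_rn /nfalse.
  apply: (leq_trans (subset_leq_card (_ : _ \subset ~: u))).
    apply/fintype.subsetP => i; rewrite !inE; apply: contra => iu.
    by apply/asboolP; rewrite /theta' iu; exact: hth.
  have := cardsC u; rewrite card_ord cu; lia.
have hA := fvalid theta' hnull a ha.
pose B j := if j \in u then set0 else ~` (Pi P j @^-1` `]-oo, dl]%classic).
have mB j : measurable (B j).
  by rewrite /B; case: (j \in u) => //; apply: measurableC; apply: mpre.
have sub : P @^-1` D `<=` [set w | f (P w) <= a] `|`
    \big[setU/set0]_(j <- index_enum 'I_n) B j.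
  move=> w /= Dw.
  case: (pselect (forall j, j \notin u -> tnth (P w) j <= dl)) => hall.
    left; apply: le_trans Dw; apply: mf => //; first exact: repl_in01n (inv_in01 _ k).
    exact: repl_ge.
  right; move/existsNP: hall => [j /not_implyP [ju hj]].
  apply: (@in_bigsetU _ _ _ _ j); first by rewrite mem_index_enum.
  rewrite /B (negbTE ju) /= => h; apply: hj.
  by move: h; rewrite /= in_itv /=.
have mA : measurable [set w | f (P w) <= a] by apply: meas_le; exact: hf.1.
apply: (le_trans (le_measure _ _ _ sub)); rewrite ?inE //.
  by rewrite -[X in measurable X]setTI; apply: mP.
  by apply: measurableU => //; apply: bigsetU_measurable.
apply: le_trans (@ubound_seq _ _ _ (mu theta') _ (index_enum 'I_n) B _ mA mB) _.
apply: leeD => //.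
apply: (@le_trans _ _ (\sum_(j <- index_enum 'I_n) eps%:E)%E).
  apply: lee_sum => j _; rewrite /B; case: ifPn => ju.
    by rewrite measure0 lee_fin ltW.
  rewrite -[X in (X <= _)%E]/(mu theta' (~` (Pi P j @^-1` `]-oo, dl]%classic))).
  rewrite (probability_setC (mu theta')); last exact: mpre.
  rewrite hmarg //.
  rewrite /theta' (negbTE ju).
  case: (ttP j) => _.
  have := probability_le1 (marg j (tt j)) (A := `]-oo, dl]%classic) (measurable_itv _).
  case: (marg j (tt j) _) => [y| |] //=; rewrite ?lte_fin ?lee_fin => h1 h2.
  by lra.
rewrite sumEFin lee_fin sumr_const card_ord.
apply: (@le_trans _ _ (eps *+ n.+1)); first by apply: ler_wpMn2l; [exact: ltW | exact: leqnSn].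
by rewrite /eps -mulr_natr divfK // pnatr_eq0.
Qed.

Lemma gvalid (u : {set 'I_n}) : #|u| = (n - r + 1)%N ->
  valid_for mu P (null_u Theta0 u) (gfun f u).
Proof.
move=> cu theta hth a ha.
have mG : measurable [set w | gfun f u (P w) <= a] by apply: meas_le; exact: gfun_meas hf mf u.
have [a1|a1] := eqVneq a 1.
  by rewrite a1; apply: probability_le1; rewrite -a1.
apply/lee_addgt0Pr => e e0.
pose a' := Num.min (a + e) 1.
case/andP: (ha) => a0 a1'.
have ha' : in01 a'.
  by rewrite /in01 /a' le_min ler01 addr_ge0 ?(ltW e0) //= ge_min lexx orbT.
have aa' : a < a' by rewrite lt_min ltrDl e0 lt_neqAle a1 a1'.
pose F k := [set w | seqg f u (P w) k <= a'].
have mF k : measurable (F k).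
  apply: (meas_le (fun p => seqg f u p k)); apply: measurableT_comp; first exact: hf.1.
  exact: measurable_repl.
have sub : [set w | gfun f u (P w) <= a] `<=` \bigcup_k F k.
  move=> w /= hw; have [k hk] := gfun_lt (le_lt_trans hw aa').
  by exists k => //; rewrite /F /=; exact: ltW.
have ndF : {homo F : i j / (i <= j)%N >-> (i <= j)%O}.
  move=> i j ij; rewrite subsetEset => w /=; apply: le_trans.
  exact: seqg_noninc.
have mU : measurable (\bigcup_k F k) by apply: bigcup_measurable => k _.
apply: (le_trans (le_measure _ _ _ sub)); rewrite ?inE //.
have cvgF := @nondecreasing_cvg_mu _ _ _ (mu theta) F mF mU ndF.
have hl : (lim ((mu theta \o F) x @[x --> \oo]) <= a'%:E)%E.
  apply: lime_le; first by apply/cvg_ex; eexists; exact: cvgF.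
  by apply: nearW => k; apply: stepA.
rewrite (cvg_lim _ cvgF) in hl; last exact: ereal_hausdorff.
apply: (le_trans hl).
by rewrite lee_fin ge_min lexx.
Qed.

Definition fstar (p : n.-tuple R) : R :=
  \big[Num.max/0]_(u : {set 'I_n} | #|u| == (n - r + 1)%N) gfun f u p.

Lemma fstar_meas : measurable_fun setT fstar.
Proof.
rewrite /fstar; elim: (index_enum _) => [|u s IH].
  under eq_fun do rewrite big_nil; exact: measurable_cst.
under eq_fun do rewrite big_cons.
case: (#|u| == (n - r + 1)%N) => //.
apply: measurable_maxr => //; exact: gfun_meas.
Qed.

Lemma fstar_ge (u : {set 'I_n}) p : #|u| = (n - r + 1)%N -> gfun f u p <= fstar p.
Proof. by move=> cu; rewrite /fstar (le_bigmax_cond _ _ (_ : #|u| == _)) // cu. Qed.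

Lemma fstar_le p : in01n p -> (forall j, 0 < tnth p j) -> fstar p <= f p.
Proof.
move=> hp hpos; apply: bigmax_le; first by case/andP: (hf.2 p hp).
by move=> u _; apply: gfun_le_f.
Qed.

Lemma main_exists : exists fstar : n.-tuple R -> R,
    [/\ GBHPC Theta0 mu P r fstar,
        valid_for mu P (null_rn Theta0 r) fstar &
        forall theta, alt_rn Theta0 r theta -> forall alpha : R, in01 alpha ->
          (mu theta [set w | (f (P w) <= alpha)%R] <=
           mu theta [set w | (fstar (P w) <= alpha)%R])%E].
Proof.
exists fstar; split.
- exists (gfun f); split => // u cu; split.
  + exact: gfun_dep.
  + by split; [exact: gfun_meas | move=> p _; exact: gfun_in01].
  + exact: gfun_mono.
  + exact: gvalid.
- move=> theta hnull a ha.
  pose T := [set i : 'I_n | `[< Theta0 i (theta i) >]]%SET.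
  have cT : (n - r + 1 <= #|T|)%N.
    move: hnull; rewrite /null_rn /nfalse.
    have -> : #|[set i | ~~ `[< Theta0 i (theta i) >]]| = #|~: T|.
      by apply: eq_card => i; rewrite !inE; apply/idP/idP; rewrite in_setE.
    have := cardsC T; rewrite card_ord; case/andP: hr => ? ?; lia.
  pose u0 := [set x in take (n - r + 1) (enum T)].
  have cu0 : #|u0| = (n - r + 1)%N.
    have hu : uniq (take (n - r + 1) (enum T)) by apply: take_uniq; exact: enum_uniq.
    by rewrite cardsE (card_uniqP hu) size_takel // -cardE.
  have hu0 : null_u Theta0 u0 theta.
    move=> j; rewrite inE => /mem_take; rewrite mem_enum inE.
    by move/asboolP.
  have mG : measurable [set w | gfun f u0 (P w) <= a].
    by apply: meas_le; exact: gfun_meas.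
  have mS : measurable [set w | fstar (P w) <= a].
    by apply: meas_le; exact: fstar_meas.
  apply: le_trans (gvalid u0 cu0 theta hu0 a ha).
  apply: le_measure; rewrite ?inE // => w /=.
  by apply: le_trans; apply: fstar_ge.
- move=> theta _ a ha.
  have mS : measurable [set w | fstar (P w) <= a].
    by apply: meas_le; exact: fstar_meas.
  have mA : measurable [set w | f (P w) <= a] by apply: meas_le; exact: hf.1.
  pose Z j := Pi P j @^-1` [set 0].
  have mZ j : measurable (Z j) by apply: mpre.
  have sub : [set w | f (P w) <= a] `<=` [set w | fstar (P w) <= a] `|`
      \big[setU/set0]_(j <- index_enum 'I_n) Z j.
    move=> w /= hw.
    case: (pselect (forall j, 0 < tnth (P w) j)) => hall.
      by left; apply: le_trans hw; apply: fstar_le.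
    right; move/existsNP: hall => [j hj].
    apply: (@in_bigsetU _ _ _ _ j); first by rewrite mem_index_enum.
    rewrite /Z /= /Pi; case/andP: (P01 w j) => h0 _.
    by move: h0; rewrite le_eqVlt => /orP[/eqP <- //|/hj].
  apply: (le_trans (le_measure _ _ _ sub)); rewrite ?inE //.
    by apply: measurableU => //; apply: bigsetU_measurable.
  apply: le_trans (@ubound_seq _ _ _ (mu theta) _ (index_enum 'I_n) Z _ mS mZ) _.
  have -> : (\sum_(j <- index_enum 'I_n) mu theta (Z j) = 0)%E.
    by rewrite big1 // => j _; exact: zero_null.
  by rewrite adde0.
Qed.

End Main.

Theorem theorem2 (R : realType) (d : measure_display) (Omega : measurableType d)
  (n r : nat) (Theta : 'I_n -> Type) (Theta0 : forall i, set (Theta i))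
  (mu : (forall i, Theta i) -> probability Omega R)
  (P : Omega -> n.-tuple R)
  (marg : forall i : 'I_n, Theta i -> probability R R)
  (f : n.-tuple R -> R) :
  (1 <= r <= n)%N ->
  (* the p-values: measurable, with values in [0,1] *)
  measurable_fun [set: Omega] P ->
  (forall w, in01n (P w)) ->
  (* P_i has distribution Pr_{theta_i} = marg i (theta i) *)
  (forall theta (i : 'I_n) (A : set R), measurable A ->
     mu theta (Pi P i @^-1` A) = marg i (theta i) A) ->
  (* the joint law of P_u depends on theta only through theta_u *)
  (forall (u : {set 'I_n}) (theta theta' : forall i, Theta i),
     (forall j, j \in u -> theta j = theta' j) ->
     forall D : set (n.-tuple R), measurable D -> set_depends_only_on u D ->
     mu theta (P @^-1` D) = mu theta' (P @^-1` D)) ->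
  (* each P_i is a valid p-value *)
  (forall (i : 'I_n) (alpha : R), in01 alpha ->
     (ereal_sup [set marg i t `]-oo, alpha]%classic | t in Theta0 i] <= alpha%:E)%E) ->
  (* independent or PRDS *)
  ((forall theta, independent_under mu P theta) \/
   (forall theta, PRDS_under mu P theta)) ->
  (* condition (i) *)
  (forall (alpha : R), 0 < alpha -> forall i : 'I_n,
     ereal_sup [set marg i t `]-oo, alpha]%classic | t in ~` Theta0 i] = 1%E) ->
  (* condition (ii) *)
  (forall (i : 'I_n) (t : Theta i), ~ Theta0 i t -> marg i t [set 0] = 0%E) ->
  (* f(P) is a valid monotone p-value for H_0^{r/n} *)
  pvalue_fun f -> monotone01 f -> valid_for mu P (null_rn Theta0 r) f ->
  exists fstar : n.-tuple R -> R,
    [/\ GBHPC Theta0 mu P r fstar,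
        valid_for mu P (null_rn Theta0 r) fstar &
        forall theta, alt_rn Theta0 r theta -> forall alpha : R, in01 alpha ->
          (mu theta [set w | (f (P w) <= alpha)%R] <=
           mu theta [set w | (fstar (P w) <= alpha)%R])%E].
Proof.
move=> hr mP P01 hmarg hdep hvalid hind hcond1 hcond2 hf mf fvalid.
exact: (@main_exists R d Omega n r Theta Theta0 mu P marg f hr mP P01 hmarg hdep hvalid hcond1 hcond2 hf mf fvalid).
Qed.
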